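(* Let $b>0$, $\beta\in(0,1)$, and let $R>0$ be such that, for the functions $\underline u_{\rm out}(r) = Lr^{-m} - br^{-l} \log \frac{r}{R}$, $\underline v_{\rm out}(r) = m(n-2-m)Lr^{-m-2} +\big[- l(n-2-l) \log \frac{r}{R} + (n-2-2l)\big]br^{-l-2}$, $\underline w_{\rm out}(r) = m(m+2)(n-2-m)(n-4-m)Lr^{-m-4} - l(l+2)(n-2-l)(n-4-l)br^{-l-4} \log \frac{r}{R} + (n-2-2l)(l+2)(n-4-l) b r^{-l-4}$, the numbers $\underline r_1 = \sup\{ r>0 : \underline u_{\rm out}(r) \leqslant 0 \}$, $\underline r_2 = \sup\{ r>0 : \underline v_{\rm out}(r) \leqslant 0 \}$, $\underline r_3 = \sup\{ r>0 : \underline w_{\rm out}(r) \leqslant 0 \}$ are well defined and satisfy $R<\underline r_1<\underline r_2<\underline r_3<+\infty$. For $c>0$ and $r>R$ define, writing $\ell(r)=\log\frac{r}{R}$, \[ \begin{aligned} \overline u_{\rm out}(r) &= Lr^{-m} -b r^{-l} \ell + cr^{-l} \ell^{\beta},\\ \overline v_{\rm out}(r) &= m(n-2-m)Lr^{-m-2} - \big[ l(n-2-l) \ell - (n-2-2l)\big] br^{-l-2} \\ &\quad + \big[ l(n-2-l) \ell^{\beta} -\beta(n-2-2l) \ell^{\beta-1} +\beta(1-\beta) \ell^{\beta-2} \big]cr^{-l-2},\\ \overline w_{\rm out}(r) &= m(m+2)(n-2-m)(n-4-m)Lr^{-m-4} - (l+2)(n-4-l) \big[ l(n-2-l) \ell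 -(n-2-2l) \big]br^{-l-4}\\ &\quad +\Big[ l (l+2) (n-2-l) (n-4-l) \ell^{\beta} - \beta(n-2-2l) (l+2)(n-4-l) \ell^{\beta-1} \\ &\qquad +\beta(1-\beta) \big(l(n-2-l)+(l+2)(n-4-l)\big) \ell^{\beta-2} + \beta(1-\beta)(2-\beta) (n-2-2l) \ell^{\beta-3} \\ &\qquad - \beta(1-\beta)(2-\beta)(3-\beta) \ell^{\beta-4} \Big]cr^{-l-4}. \end{aligned} \] Then there exists $c_1>0$ such that for all $c>c_1$, \[ -\Delta \overline u_{\rm out} = \overline v_{\rm out} \ \text{ for all } r>R,\qquad -\Delta \overline v_{\rm out} = \overline w_{\rm out} \ \text{ for all } r>R,\qquad -\Delta \overline w_{\rm out} \geqslant \overline u_{\rm out}^p \ \text{ for all } r>\overline r_1, \] where $\overline r_1 = R \exp\big((c/b)^{\frac{1}{1-\beta}}\big)$.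
   Context: Let $n\geqslant 15$ and $p=p_{\mathsf{JL}}(6,n)$, where $p_{\mathsf{JL}}(6,n)=\frac{(n+4)\sqrt{3} - \sqrt{\sqrt[3]{K_0+K_1}+ \sqrt[3]{K_0-K_1} + 3n^2+32 }}{(n-8)\sqrt{3} - \sqrt{\sqrt[3]{K_0+K_1} + \sqrt[3]{K_0-K_1} + 3n^2+32 }}$ with $2K_0 =-27n^6+324 n^5-756n^4-2592 n^3 + 25776 n^2 +5184 n -23744$, $2K_1 = \sqrt{(2K_0)^2 - 4(192n^2+256)^3}$. Let $m=6/(p-1)$, $L=\big(m(m+2)(m+4)(n-2-m)(n-4-m)(n-6-m)\big)^{1/(p-1)}$, let $\lambda_3$ be the smallest positive root of $P(\lambda)=(m+\lambda)(m+\lambda+2)(m+\lambda+4)(n-2-m-\lambda)(n-4-m-\lambda)(n-6-m-\lambda)-pL^{p-1}$, and set $l=m+\lambda_3$. For a function $f$ of $r=|x|$, $\Delta f$ denotes the Laplacian in $\mathbf R^n$ of $x\mapsto f(|x|)$, i.e. $f''+\frac{n-1}{r}f'$. *)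

(* Defs.v *)
From Stdlib Require Import Reals.
From Coquelicot Require Import Coquelicot.
Open Scope R_scope.

Definition rpow (x y : R) : R := if Rlt_dec 0 x then Rpower x y else 0.

Definition cbrt (x : R) : R :=
  if Rlt_dec 0 x then Rpower x (1/3)
  else if Rlt_dec x 0 then - Rpower (- x) (1/3) else 0.

Definition K0 (n : R) : R :=
  (-27*n^6 + 324*n^5 - 756*n^4 - 2592*n^3 + 25776*n^2 + 5184*n - 23744) / 2.
Definition K1 (n : R) : R :=
  sqrt ((2 * K0 n)^2 - 4 * (192*n^2 + 256)^3) / 2.

Definition SJL (n : R) : R :=
  sqrt (cbrt (K0 n + K1 n) + cbrt (K0 n - K1 n) + 3*n^2 + 32).

Definition pJL (n : R) : R :=
  ((n + 4) * sqrt 3 - SJL n) / ((n - 8) * sqrt 3 - SJL n).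

Definition mexp (n : R) : R := 6 / (pJL n - 1).

Definition Lc (n : R) : R :=
  let m := mexp n in
  rpow (m*(m+2)*(m+4)*(n-2-m)*(n-4-m)*(n-6-m)) (1 / (pJL n - 1)).

Definition Ppoly (n lam : R) : R :=
  let m := mexp n in let p := pJL n in
  (m+lam)*(m+lam+2)*(m+lam+4)*(n-2-m-lam)*(n-4-m-lam)*(n-6-m-lam)
  - p * rpow (Lc n) (p - 1).

(* radial Laplacian in R^n : f'' + (n-1)/r f' *)
Definition lap (n : R) (f : R -> R) (r : R) : R :=
  Derive (Derive f) r + (n - 1) / r * Derive f r.

Definition ell (R0 r : R) : R := ln (r / R0).

Definition u_low (n l b R0 : R) (r : R) : R :=
  let m := mexp n in let L := Lc n in
  L * rpow r (-m) - b * rpow r (-l) * ell R0 r.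

Definition v_low (n l b R0 : R) (r : R) : R :=
  let m := mexp n in let L := Lc n in
  m*(n-2-m)*L*rpow r (-m-2)
  + (- l*(n-2-l) * ell R0 r + (n-2-2*l)) * b * rpow r (-l-2).

Definition w_low (n l b R0 : R) (r : R) : R :=
  let m := mexp n in let L := Lc n in
  m*(m+2)*(n-2-m)*(n-4-m)*L*rpow r (-m-4)
  - l*(l+2)*(n-2-l)*(n-4-l)*b*rpow r (-l-4) * ell R0 r
  + (n-2-2*l)*(l+2)*(n-4-l)*b*rpow r (-l-4).

Definition u_up (n l b c beta R0 : R) (r : R) : R :=
  let m := mexp n in let L := Lc n in let e := ell R0 r in
  L * rpow r (-m) - b * rpow r (-l) * e + c * rpow r (-l) * rpow e beta.

Definition v_up (n l b c beta R0 : R) (r : R) : R :=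
  let m := mexp n in let L := Lc n in let e := ell R0 r in
  m*(n-2-m)*L*rpow r (-m-2)
  - (l*(n-2-l)*e - (n-2-2*l)) * b * rpow r (-l-2)
  + (l*(n-2-l)*rpow e beta - beta*(n-2-2*l)*rpow e (beta-1)
     + beta*(1-beta)*rpow e (beta-2)) * c * rpow r (-l-2).

Definition w_up (n l b c beta R0 : R) (r : R) : R :=
  let m := mexp n in let L := Lc n in let e := ell R0 r in
  m*(m+2)*(n-2-m)*(n-4-m)*L*rpow r (-m-4)
  - (l+2)*(n-4-l)*(l*(n-2-l)*e - (n-2-2*l)) * b * rpow r (-l-4)
  + ( l*(l+2)*(n-2-l)*(n-4-l)*rpow e beta
      - beta*(n-2-2*l)*(l+2)*(n-4-l)*rpow e (beta-1)
      + beta*(1-beta)*(l*(n-2-l) + (l+2)*(n-4-l))*rpow e (beta-2)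
      + beta*(1-beta)*(2-beta)*(n-2-2*l)*rpow e (beta-3)
      - beta*(1-beta)*(2-beta)*(3-beta)*rpow e (beta-4) ) * c * rpow r (-l-4).

(* Main.v *)
Require Import Defs.
From Stdlib Require Import Reals Lra Psatz List.
From Coquelicot Require Import Coquelicot.
Open Scope R_scope.
Import ListNotations.

Lemma rpow_pos_eq x a : 0 < x -> rpow x a = Rpower x a.
Proof. intros H; unfold rpow; destruct (Rlt_dec 0 x); [reflexivity|lra]. Qed.

Lemma rpow_m1 x a : 0 < x -> rpow x (a - 1) = rpow x a / x.
Proof. intros H; rewrite !rpow_pos_eq by lra. unfold Rminus.
  rewrite Rpower_plus, Rpower_Ropp, Rpower_1 by lra. reflexivity. Qed.
Lemma rpow_m2 x a : 0 < x -> rpow x (a - 2) = rpow x a / x / x.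
Proof. intros H. replace (a-2) with (a-1-1) by ring. rewrite !rpow_m1 by lra. reflexivity. Qed.
Lemma rpow_m3 x a : 0 < x -> rpow x (a - 3) = rpow x a / x / x / x.
Proof. intros H. replace (a-3) with (a-1-1-1) by ring. rewrite !rpow_m1 by lra. reflexivity. Qed.
Lemma rpow_m4 x a : 0 < x -> rpow x (a - 4) = rpow x a / x / x / x / x.
Proof. intros H. replace (a-4) with (a-1-1-1-1) by ring. rewrite !rpow_m1 by lra. reflexivity. Qed.
Lemma rpow_0 x : 0 < x -> rpow x 0 = 1.
Proof. intros H; rewrite rpow_pos_eq by lra; apply Rpower_O; lra. Qed.
Lemma rpow_1 x : 0 < x -> rpow x 1 = x.
Proof. intros H; rewrite rpow_pos_eq by lra; apply Rpower_1; lra. Qed.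

Definition T (R0 a k x : R) : R := rpow x a * rpow (ell R0 x) k.

Lemma locally_gt (R0 x : R) : R0 < x -> locally x (fun y => R0 < y).
Proof.
  intros H. assert (Hp : 0 < x - R0) by lra.
  exists (mkposreal _ Hp). intros y Hy. cbv [ball] in Hy; simpl in Hy.
  unfold AbsRing_ball, abs, minus, plus, opp in Hy; simpl in Hy.
  apply Rabs_lt_between in Hy. lra.
Qed.

Lemma ell_pos R0 x : 0 < R0 -> R0 < x -> 0 < ell R0 x.
Proof. intros H1 H2. unfold ell. rewrite <- ln_1. apply ln_increasing; [lra|].
  apply (Rmult_lt_reg_r R0); [lra|]. field_simplify; lra. Qed.

Lemma T_derive R0 a k x : 0 < R0 -> R0 < x ->
  is_derive (T R0 a k) x (a * T R0 (a-1) k x + k * T R0 (a-1) (k-1) x).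
Proof.
  intros H0 Hx.
  apply is_derive_ext_loc with (f := fun y => exp (a * ln y) * exp (k * ln (ln (y / R0)))).
  { generalize (locally_gt R0 x Hx). apply filter_imp. intros y Hy.
    unfold T. rewrite !rpow_pos_eq; [|apply ell_pos; lra|lra]. reflexivity. }
  assert (He := ell_pos R0 x H0 Hx). unfold ell in He.
  auto_derive.
  - repeat split; try lra. apply Rdiv_lt_0_compat; lra.
  - unfold T. rewrite !rpow_m1 by (try apply ell_pos; lra).
    rewrite !rpow_pos_eq by (try apply ell_pos; lra). unfold Rpower, ell.
    unfold Rdiv. field. assert (0 < ln (x * / R0)) by exact He. repeat split; lra.
Qed.

Fixpoint SL (R0 : R) (l : list (R*R*R)) (x : R) : R :=
  match l with nil => 0 | (c,a,k)::t => c * T R0 a k x + SL R0 t x end.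
Fixpoint DL (l : list (R*R*R)) : list (R*R*R) :=
  match l with nil => nil | (c,a,k)::t => (c*a, a-1, k) :: (c*k, a-1, k-1) :: DL t end.

Lemma SL_derive R0 l x : 0 < R0 -> R0 < x -> is_derive (SL R0 l) x (SL R0 (DL l) x).
Proof.
  intros H0 Hx. induction l as [|[[c a] k] t IH]; simpl.
  - auto_derive; auto.
  - replace (c * a * T R0 (a - 1) k x + (c * k * T R0 (a - 1) (k - 1) x + SL R0 (DL t) x))
      with (c * (a * T R0 (a-1) k x + k * T R0 (a-1) (k-1) x) + SL R0 (DL t) x) by ring.
    apply @is_derive_plus; [|exact IH].
    apply @is_derive_scal. apply T_derive; lra.
Qed.

Lemma lap_SL n R0 l r : 0 < R0 -> R0 < r ->
  lap n (SL R0 l) r = SL R0 (DL (DL l)) r + (n-1)/r * SL R0 (DL l) r.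
Proof.
  intros H0 Hr. unfold lap.
  rewrite (is_derive_unique _ _ _ (SL_derive R0 l r H0 Hr)).
  rewrite (Derive_ext_loc _ (SL R0 (DL l))).
  - rewrite (is_derive_unique _ _ _ (SL_derive R0 (DL l) r H0 Hr)). reflexivity.
  - generalize (locally_gt R0 r Hr). apply filter_imp. intros y Hy.
    apply is_derive_unique, SL_derive; lra.
Qed.

Lemma lap_ext n R0 f g r : 0 < R0 -> (forall y, R0 < y -> f y = g y) -> R0 < r ->
  lap n f r = lap n g r.
Proof.
  intros H0 Hfg Hr. unfold lap.
  assert (Hd : forall y, R0 < y -> Derive f y = Derive g y).
  { intros y Hy. apply Derive_ext_loc. generalize (locally_gt R0 y Hy).
    apply filter_imp. intros z Hz; apply Hfg; lra. }
  rewrite (Hd r Hr). f_equal. apply Derive_ext_loc.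
  generalize (locally_gt R0 r Hr). apply filter_imp. intros z Hz; apply Hd; lra.
Qed.

Ltac norm_rpow Hr He :=
  repeat (rewrite ?(rpow_m1 _ _ Hr), ?(rpow_m2 _ _ Hr), ?(rpow_m3 _ _ Hr), ?(rpow_m4 _ _ Hr),
    ?(rpow_m1 _ _ He), ?(rpow_m2 _ _ He), ?(rpow_m3 _ _ He), ?(rpow_m4 _ _ He),
    ?(rpow_0 _ He), ?(rpow_1 _ He)).

Lemma part1 n l b c beta R0 r : 0 < R0 -> R0 < r ->
  - lap n (u_up n l b c beta R0) r = v_up n l b c beta R0 r.
Proof.
  intros H0 Hr.
  set (m := mexp n). set (L := Lc n).
  rewrite (lap_ext n R0 _ (SL R0 [(L, -m, 0); (-b, -l, 1); (c, -l, beta)])); auto.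
  2:{ intros y Hy. unfold u_up; cbn [SL]; unfold T. fold m L.
      assert (He := ell_pos R0 y H0 Hy). rewrite (rpow_0 _ He), (rpow_1 _ He). ring. }
  rewrite lap_SL by auto. cbn [SL DL]. unfold T, v_up. fold m L.
  assert (He := ell_pos R0 r H0 Hr). assert (Hr' : 0 < r) by lra.
  set (e := ell R0 r) in *.
  norm_rpow Hr' He. field. split; lra.
Qed.

Lemma part2 n l b c beta R0 r : 0 < R0 -> R0 < r -> n = 2*l+6 ->
  - lap n (v_up n l b c beta R0) r = w_up n l b c beta R0 r.
Proof.
  intros H0 Hr Hn.
  set (m := mexp n). set (L := Lc n).
  rewrite (lap_ext n R0 _ (SL R0 [(m*(n-2-m)*L, -m-2, 0); (-b*(l*(n-2-l)), -l-2, 1);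
     (b*(n-2-2*l), -l-2, 0); (c*(l*(n-2-l)), -l-2, beta); (-c*(beta*(n-2-2*l)), -l-2, beta-1);
     (c*(beta*(1-beta)), -l-2, beta-2)])); auto.
  2:{ intros y Hy. unfold v_up; cbn [SL]; unfold T. fold m L.
      assert (He := ell_pos R0 y H0 Hy). rewrite !(rpow_0 _ He), (rpow_1 _ He). ring. }
  rewrite lap_SL by auto. cbn [SL DL]. unfold T, w_up. fold m L.
  assert (He := ell_pos R0 r H0 Hr). assert (Hr' : 0 < r) by lra.
  set (e := ell R0 r) in *. clearbody m L. subst n.
  norm_rpow Hr' He. field. split; lra.
Qed.

Definition A0 (l : R) := l^2*(l+2)^2*(l+4)^2.
Definition A2 (l : R) := - ((l+2)^2*(l+4)^2 + l^2*(l+4)^2 + l^2*(l+2)^2).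
Definition A4 (l : R) := l^2 + (l+2)^2 + (l+4)^2.

Lemma part3_id n l b c beta R0 r : 0 < R0 -> R0 < r -> n = 2*l+6 ->
  - lap n (w_up n l b c beta R0) r =
  (Lc n * (mexp n*(mexp n+2)*(mexp n+4)*(n-2-mexp n)*(n-4-mexp n)*(n-6-mexp n)) * rpow r (-mexp n)
   + rpow r (-l) * ( A0 l * (c * rpow (ell R0 r) beta - b * ell R0 r)
     + c * rpow (ell R0 r) beta * (A2 l * (beta*(beta-1)) / (ell R0 r)^2
        + A4 l * (beta*(beta-1)*(beta-2)*(beta-3)) / (ell R0 r)^4
        - beta*(beta-1)*(beta-2)*(beta-3)*(beta-4)*(beta-5)/(ell R0 r)^6))) / r^6.
Proof.
  intros H0 Hr Hn.
  set (m := mexp n). set (L := Lc n).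
  rewrite (lap_ext n R0 _ (SL R0 [(m*(m+2)*(n-2-m)*(n-4-m)*L, -m-4, 0);
     (-b*((l+2)*(n-4-l)*(l*(n-2-l))), -l-4, 1);
     (b*((l+2)*(n-4-l)*(n-2-2*l)), -l-4, 0);
     (c*(l*(l+2)*(n-2-l)*(n-4-l)), -l-4, beta);
     (-c*(beta*(n-2-2*l)*(l+2)*(n-4-l)), -l-4, beta-1);
     (c*(beta*(1-beta)*(l*(n-2-l) + (l+2)*(n-4-l))), -l-4, beta-2);
     (c*(beta*(1-beta)*(2-beta)*(n-2-2*l)), -l-4, beta-3);
     (-c*(beta*(1-beta)*(2-beta)*(3-beta)), -l-4, beta-4)])); auto.
  2:{ intros y Hy. unfold w_up; cbn [SL]; unfold T. fold m L.
      assert (He := ell_pos R0 y H0 Hy). rewrite !(rpow_0 _ He), (rpow_1 _ He). ring. }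
  rewrite lap_SL by auto. cbn [SL DL]. unfold T, A0, A2, A4. fold m L.
  assert (He := ell_pos R0 r H0 Hr). assert (Hr' : 0 < r) by lra.
  set (e := ell R0 r) in *. clearbody m L. subst n.
  norm_rpow Hr' He. field. split; lra.
Qed.

Lemma cube_rpow z : 0 < z -> (Rpower z (1/3))^3 = z.
Proof. intros H. rewrite <- Rpower_pow by (apply exp_pos).
  rewrite Rpower_mult. replace (1/3 * INR 3) with 1 by (simpl; field). apply Rpower_1; auto. Qed.

Lemma cube_inj x y : 0 < x -> 0 < y -> x^3 = y^3 -> x = y.
Proof. intros Hx Hy H.
  assert (Hf : (x-y)*(x^2+x*y+y^2) = 0) by (ring_simplify; lra).
  apply Rmult_integral in Hf. destruct Hf as [Hf|Hf]; [lra|]. nra.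
Qed.

Lemma tpows t : 0 <= t -> 0 <= t^1 /\ 0 <= t^2 /\ 0 <= t^3 /\ 0 <= t^4 /\ 0 <= t^5 /\ 0 <= t^6
  /\ 0 <= t^7 /\ 0 <= t^8 /\ 0 <= t^9 /\ 0 <= t^10 /\ 0 <= t^11 /\ 0 <= t^12.
Proof. intros H; repeat split; apply pow_le; auto. Qed.

Definition qq (N : R) := 192*N^2 + 256.
Definition hh (N y : R) := y^3 - 3 * qq N * y - 2 * K0 N.

Lemma K0_neg N : 15 <= N -> K0 N < 0.
Proof. intros H. set (t := N - 15). assert (Ht : 0 <= t) by (unfold t; lra).
  replace (K0 N) with ((-102676259/2)*t^0 + (-26091693)*t^1 + (-10679589/2)*t^2 + (-570726)*t^3 + (-67581/2)*t^4 + (-1053)*t^5 + (-27/2)*t^6)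
   by (unfold t, K0; field).
  destruct (tpows t Ht) as (?&?&?&?&?&?&_). simpl (t^0). lra. Qed.

Lemma d_pos N : 15 <= N -> 0 < (2 * K0 N)^2 - 4 * (192*N^2 + 256)^3.
Proof. intros H. set (t := N - 15). assert (Ht : 0 <= t) by (unfold t; lra).
  replace ((2 * K0 N)^2 - 4 * (192*N^2 + 256)^3) with ((10214160759983817)*t^0 + (10585461850409628)*t^1 + (4894534148604354)*t^2 + (1347076448060364)*t^3 + (246965545626615)*t^4 + (31863611628216)*t^5 + (2971699904988)*t^6 + (202081266936)*t^7 + (9951685191)*t^8 + (346289580)*t^9 + (8084610)*t^10 + (113724)*t^11 + (729)*t^12)
   by (unfold t, K0; field).
  destruct (tpows t Ht) as (?&?&?&?&?&?&?&?&?&?&?&?). simpl (t^0). lra. Qed.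

Lemma h0_pos N : 15 <= N -> 0 < hh N (160 - 48*N).
Proof. intros H. set (t := N - 15). assert (Ht : 0 <= t) by (unfold t; lra).
  replace (hh N (160 - 48*N)) with ((66339)*t^0 + (22959450)*t^1 + (7960869)*t^2 + (1058508)*t^3 + (67581)*t^4 + (2106)*t^5 + (27)*t^6)
   by (unfold t, hh, qq, K0; field).
  destruct (tpows t Ht) as (?&?&?&?&?&?&_). simpl (t^0). lra. Qed.

Lemma h1_neg N : 15 <= N -> hh N (-(3*N^2+32)) < 0.
Proof. intros H. set (t := N - 15). assert (Ht : 0 <= t) by (unfold t; lra).
  replace (hh N (-(3*N^2+32))) with ((-158546808)*t^0 + (-58825764)*t^1 + (-8645616)*t^2 + (-629208)*t^3 + (-22680)*t^4 + (-324)*t^5)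
   by (unfold t, hh, qq, K0; field).
  destruct (tpows t Ht) as (?&?&?&?&?&?&_). simpl (t^0). lra. Qed.

Lemma cbrt_neg x : x < 0 -> cbrt x = - Rpower (-x) (1/3).
Proof. intros H. unfold cbrt. destruct (Rlt_dec 0 x); [lra|].
  destruct (Rlt_dec x 0); [reflexivity|lra]. Qed.

Lemma root_cmp N A y0 : hh N A = 0 -> A^2 > 4 * qq N ->
  (0 < hh N y0 -> A < y0) /\ (hh N y0 < 0 -> y0 < A).
Proof.
  intros HA H2.
  assert (E : hh N y0 - hh N A = (y0 - A) * ((y0 + A/2)^2 + 3/4*(A^2 - 4*qq N)))
    by (unfold hh; field).
  assert (P : 0 < (y0 + A/2)^2 + 3/4*(A^2 - 4*qq N)).
  { assert (0 <= (y0 + A/2)^2) by (apply pow2_ge_0). lra. }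
  rewrite HA in E. split; intros H.
  - destruct (Rlt_le_dec A y0) as [|Hc]; auto. exfalso.
    assert ((y0 - A) * ((y0 + A/2)^2 + 3/4*(A^2 - 4*qq N)) <= 0).
    { assert (0 <= A - y0) by lra. nra. } lra.
  - destruct (Rlt_le_dec y0 A) as [|Hc]; auto. exfalso.
    assert (0 <= (y0 - A) * ((y0 + A/2)^2 + 3/4*(A^2 - 4*qq N))).
    { apply Rmult_le_pos; lra. } lra.
Qed.

Lemma pJL_facts N : 15 <= N -> exists s, 0 <= s < N - 8 /\
  (N^2-s^2)*((N+4)^2-s^2)*((N-4)^2-s^2) = (N-6)^2*(N-2)^2*(N+2)^2 /\
  pJL N = (N+4-s)/(N-8-s).
Proof.
  intros HN.
  assert (HK0 := K0_neg N HN). assert (Hd := d_pos N HN).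
  set (q := qq N). assert (Hq : 0 < q) by (unfold q, qq; nra).
  assert (HK1d : (K1 N)^2 = (K0 N)^2 - q^3).
  { unfold K1. unfold Rdiv. rewrite Rpow_mult_distr, <- Rsqr_pow2, Rsqr_sqrt by lra.
    unfold q, qq. field. }
  assert (HK1p : 0 < K1 N).
  { unfold K1. apply Rdiv_lt_0_compat; [apply sqrt_lt_R0; lra| lra]. }
  assert (Hpl : K0 N + K1 N < 0).
  { assert (0 < q^3) by (apply pow_lt; lra). nra. }
  assert (Hmi : K0 N - K1 N < 0) by lra.
  set (al := Rpower (-(K0 N + K1 N)) (1/3)).
  set (be := Rpower (-(K0 N - K1 N)) (1/3)).
  assert (Hal : 0 < al) by apply exp_pos. assert (Hbe : 0 < be) by apply exp_pos.
  assert (Hal3 : al^3 = -(K0 N + K1 N)) by (apply cube_rpow; lra).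
  assert (Hbe3 : be^3 = -(K0 N - K1 N)) by (apply cube_rpow; lra).
  assert (Hab : al * be = q).
  { apply cube_inj; [nra|lra|]. rewrite Rpow_mult_distr, Hal3, Hbe3. nra. }
  assert (Hneq : al <> be).
  { intro E. rewrite E in Hal3. lra. }
  set (A := cbrt (K0 N + K1 N) + cbrt (K0 N - K1 N)).
  assert (HA : A = -(al + be)).
  { unfold A. rewrite !cbrt_neg by lra. fold al be. ring. }
  assert (HhA : hh N A = 0).
  { unfold hh. fold q. rewrite HA.
    replace ((- (al + be))^3 - 3*q*(- (al+be)) - 2 * K0 N) with
      (-(al^3 + (K0 N + K1 N)) - (be^3 + (K0 N - K1 N)) + 3*(al+be)*(q - al*be)) by ring.
    rewrite Hal3, Hbe3, Hab. ring. }
  assert (HA2 : A^2 > 4*q).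
  { rewrite HA, <- Hab. assert (0 < (al - be)^2).
    { assert (al - be <> 0) by lra. generalize (Rsqr_pos_lt _ H). unfold Rsqr. nra. } nra. }
  destruct (root_cmp N A (160 - 48*N) HhA HA2) as [Hup _].
  specialize (Hup (h0_pos N HN)).
  destruct (root_cmp N A (-(3*N^2+32)) HhA HA2) as [_ Hlo].
  specialize (Hlo (h1_neg N HN)).
  assert (HS : SJL N = sqrt (A + 3*N^2 + 32)) by reflexivity.
  set (S := SJL N) in *.
  assert (HS2 : S^2 = A + 3*N^2 + 32).
  { rewrite HS, <- Rsqr_pow2. apply Rsqr_sqrt. lra. }
  assert (HS0 : 0 <= S) by (rewrite HS; apply sqrt_pos).
  assert (H3 : 0 < sqrt 3) by apply Rlt_sqrt3_0.
  assert (H33 : sqrt 3 * sqrt 3 = 3) by (apply sqrt_sqrt; lra).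
  exists (S / sqrt 3).
  assert (Hs2 : (S / sqrt 3)^2 = (A + 3*N^2+32)/3).
  { replace ((S / sqrt 3)^2) with (S^2 / (sqrt 3 * sqrt 3)) by (field; lra).
    rewrite H33, HS2. reflexivity. }
  split; [split|split].
  - apply Rmult_le_pos; [lra| apply Rlt_le, Rinv_0_lt_compat; lra].
  - assert (0 <= S / sqrt 3) by (apply Rmult_le_pos; [lra| apply Rlt_le, Rinv_0_lt_compat; lra]).
    assert ((S / sqrt 3)^2 < (N-8)^2).
    { rewrite Hs2. apply (Rmult_lt_reg_r 3); [lra|].
      replace ((A + 3 * N ^ 2 + 32) / 3 * 3) with (A + 3 * N ^ 2 + 32) by field. lra. }
    set (x := S / sqrt 3) in *. clearbody x.
    destruct (Rlt_le_dec x (N-8)) as [|Hc]; auto. exfalso.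
    assert ((N-8)*(N-8) <= x * x) by (apply Rmult_le_compat; lra). lra.
  - rewrite Hs2. assert (H := HhA). unfold hh, qq in H.
    replace A with (3 * ((A + 3 * N ^ 2 + 32) / 3) - 3*N^2 - 32) in H by field.
    set (y := (A + 3 * N ^ 2 + 32) / 3) in *. clearbody y.
    match type of H with ?E = 0 =>
      assert (EE : E = -27 * ((N^2-y)*((N+4)^2-y)*((N-4)^2-y) - (N-6)^2*(N-2)^2*(N+2)^2))
        by (unfold K0; field) end.
    lra.
  - assert (HSlt : S < (N-8) * sqrt 3).
    { assert (S^2 < ((N-8) * sqrt 3)^2).
      { replace (((N-8) * sqrt 3)^2) with ((N-8)^2 * (sqrt 3 * sqrt 3)) by ring.
        rewrite H33, HS2. lra. }
      destruct (Rlt_le_dec S ((N-8) * sqrt 3)) as [|Hc]; auto. exfalso.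
      assert (((N-8) * sqrt 3)*((N-8) * sqrt 3) <= S * S) by (apply Rmult_le_compat; nra). nra. }
    unfold pJL. fold S. field. lra.
Qed.

Lemma exp_le x y : x <= y -> exp x <= exp y.
Proof. intros [H|H]; [apply Rlt_le, exp_increasing; auto| subst; lra]. Qed.

Lemma ln_le' x y : 0 < x -> x <= y -> ln x <= ln y.
Proof. intros H [H1|H1]; [apply Rlt_le, ln_increasing; auto| subst; lra]. Qed.

Lemma bern d p : 0 <= d < 1 -> 0 < p -> Rpower (1-d) p <= 1 - p*d + p^2*d^2.
Proof.
  intros Hd Hp. unfold Rpower.
  assert (Hl : ln (1-d) <= -d).
  { rewrite <- (ln_exp (-d)). apply ln_le'; [lra|]. generalize (exp_ineq1_le (-d)); lra. }
  apply Rle_trans with (exp (-(p*d))).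
  { apply exp_le. nra. }
  replace (p^2*d^2) with ((p*d)^2) by ring.
  set (y := p*d). assert (Hy : 0 <= y) by (unfold y; nra). clearbody y.
  assert (E : exp y = exp (y/2) * exp (y/2)) by (rewrite <- exp_plus; f_equal; field).
  assert (H2 := exp_ineq1_le (y/2)).
  assert (Hey : (1 + y/2)^2 <= exp y) by (rewrite E; nra).
  rewrite exp_Ropp. assert (0 < exp y) by apply exp_pos.
  apply (Rmult_le_reg_r (exp y)); auto. rewrite Rinv_l by lra.
  assert (0 <= 1 - y + y^2) by nra.
  apply Rle_trans with ((1 - y + y^2) * (1 + y/2)^2).
  - nra.
  - apply Rmult_le_compat_l; auto.
Qed.

Lemma exp5 y : 0 <= y -> y^5/3125 <= exp y.
Proof.
  intros Hy. assert (H := exp_ineq1_le (y/5)).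
  assert (E : exp y = (exp (y/5))^5).
  { simpl. rewrite Rmult_1_r, <- !exp_plus. f_equal. field. }
  rewrite E. replace (y^5/3125) with ((y/5)^5) by field.
  apply pow_incr. lra.
Qed.

Definition QQ (N x : R) := x*(x+2)*(x+4)*(N-2-x)*(N-4-x)*(N-6-x).

Lemma Q_lt c0 x : 0 < x < c0 -> QQ (2*c0+6) x < QQ (2*c0+6) c0.
Proof.
  intros Hx. set (s := (x - c0)^2).
  assert (Hs : 0 < s < c0^2).
  { unfold s. split; [assert (x - c0 <> 0) by lra; generalize (Rsqr_pos_lt _ H); unfold Rsqr; nra| nra]. }
  replace (QQ (2*c0+6) x) with ((c0^2-s)*((c0+2)^2-s)*((c0+4)^2-s)) by (unfold QQ, s; ring).
  replace (QQ (2*c0+6) c0) with ((c0^2)*((c0+2)^2)*((c0+4)^2)) by (unfold QQ; ring).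
  assert (c0^2 < (c0+2)^2) by nra. assert ((c0+2)^2 < (c0+4)^2) by nra.
  assert (H1 : (c0^2-s)*((c0+2)^2-s) < c0^2*(c0+2)^2) by nra.
  assert (0 < (c0^2-s)*((c0+2)^2-s)) by nra.
  nra.
Qed.

Lemma final_ineq A X Qm p G r6 : 0 < A -> 0 <= X < A -> 0 < Qm -> 0 < p -> 0 < r6 ->
  Rpower A p = A*Qm/r6 -> p^2*Qm*X^2/A <= G ->
  Rpower (A - X) p <= (A*Qm - p*Qm*X + G)/r6.
Proof.
  intros HA HX HQ Hp Hr HAp HG.
  assert (Hd : 0 <= X/A < 1).
  { split; [apply Rmult_le_pos; [lra| apply Rlt_le, Rinv_0_lt_compat; lra]|].
    apply (Rmult_lt_reg_r A); auto. field_simplify; lra. }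
  replace (A - X) with (A * (1 - X/A)) by (field; lra).
  rewrite <- Rpower_mult_distr by lra. rewrite HAp.
  apply Rle_trans with (A*Qm/r6 * (1 - p*(X/A) + p^2*(X/A)^2)).
  { apply Rmult_le_compat_l; [apply Rmult_le_pos; [nra| apply Rlt_le, Rinv_0_lt_compat; lra]|].
    apply bern; auto. }
  replace (A*Qm/r6 * (1 - p*(X/A) + p^2*(X/A)^2)) with ((A*Qm - p*Qm*X + p^2*Qm*X^2/A)/r6) by (field; lra).
  unfold Rdiv. apply Rmult_le_compat_r; [apply Rlt_le, Rinv_0_lt_compat; lra|]. lra.
Qed.

Lemma Gbound g u4 u6 e : 0 < g -> 1 <= e -> 1 + 2*(Rabs u4 + Rabs u6)/g <= e ->
  g/(2*e^2) <= g/e^2 + u4/e^4 - u6/e^6.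
Proof.
  intros Hg He HE.
  set (M := Rabs u4 + Rabs u6) in *.
  assert (HM : 0 <= M) by (unfold M; generalize (Rabs_pos u4) (Rabs_pos u6); lra).
  assert (HMe : 2*M <= g*e).
  { assert (2*M/g <= e - 1) by lra.
    apply (Rmult_le_compat_l g) in H; [|lra].
    replace (g*(2*M/g)) with (2*M) in H by (field; lra). nra. }
  assert (He2 : 1 <= e^2) by nra.
  assert (Hu4 : - Rabs u4 <= u4) by (generalize (Rabs_Ropp u4) (RRle_abs (-u4)); lra).
  assert (Hu6 : u6 <= Rabs u6) by apply RRle_abs.
  assert (Hkey : g*e^4/2 <= g*e^4 + u4*e^2 - u6).
  { assert (M*e^2 <= g*e^4/2).
    { assert (M*e^2 <= g*e*e^2/2) by (apply (Rmult_le_compat_r (e^2)) in HMe; nra).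
      assert (g*e*e^2 <= g*e^4) by (assert (e*e^2 <= e^4) by nra; nra). lra. }
    assert (- Rabs u4 * e^2 <= u4 * e^2) by (apply Rmult_le_compat_r; nra).
    assert (Rabs u6 <= Rabs u6 * e^2) by (generalize (Rabs_pos u6); nra).
    unfold M in *. nra. }
  assert (0 < e) by lra.
  apply (Rmult_le_reg_r (e^6)); [apply pow_lt; lra|].
  replace (g/(2*e^2)*e^6) with (g*e^4/2) by (field; lra).
  replace ((g/e^2 + u4/e^4 - u6/e^6)*e^6) with (g*e^4 + u4*e^2 - u6) by (field; lra).
  exact Hkey.
Qed.

Theorem lemma4p4 (n : nat) (b beta R0 lam3 : R) :
  (15 <= n)%nat -> 0 < b -> 0 < beta < 1 -> 0 < R0 ->
  0 < lam3 -> Ppoly (INR n) lam3 = 0 ->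
  (forall lam, 0 < lam -> Ppoly (INR n) lam = 0 -> lam3 <= lam) ->
  (exists r1 r2 r3 : R,
     is_lub (fun r => 0 < r /\ u_low (INR n) (mexp (INR n) + lam3) b R0 r <= 0) r1 /\
     is_lub (fun r => 0 < r /\ v_low (INR n) (mexp (INR n) + lam3) b R0 r <= 0) r2 /\
     is_lub (fun r => 0 < r /\ w_low (INR n) (mexp (INR n) + lam3) b R0 r <= 0) r3 /\
     R0 < r1 /\ r1 < r2 /\ r2 < r3) ->
  exists c1 : R, 0 < c1 /\
    forall c : R, c1 < c ->
      (forall r, R0 < r ->
         - lap (INR n) (u_up (INR n) (mexp (INR n) + lam3) b c beta R0) r
         = v_up (INR n) (mexp (INR n) + lam3) b c beta R0 r) /\
      (forall r, R0 < r ->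
         - lap (INR n) (v_up (INR n) (mexp (INR n) + lam3) b c beta R0) r
         = w_up (INR n) (mexp (INR n) + lam3) b c beta R0 r) /\
      (forall r, R0 * exp (rpow (c / b) (1 / (1 - beta))) < r ->
         - lap (INR n) (w_up (INR n) (mexp (INR n) + lam3) b c beta R0) r
         >= rpow (u_up (INR n) (mexp (INR n) + lam3) b c beta R0 r) (pJL (INR n))).
Proof.
  intros Hn Hb Hbeta HR0 Hlam HP Hmin _.
  set (N := INR n) in *.
  assert (HN : 15 <= N).
  { unfold N. replace 15 with (INR 15) by (simpl; ring). apply le_INR; auto. }
  destruct (pJL_facts N HN) as [s [[Hs0 Hs1] [Hcub Hp]]].
  assert (Hd : 0 < N - 8 - s) by lra.
  assert (Hm : mexp N = (N-8-s)/2).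
  { unfold mexp. rewrite Hp. field. lra. }
  assert (Hp1 : 1 < pJL N).
  { rewrite Hp. apply (Rmult_lt_reg_r (N-8-s)); auto. field_simplify; lra. }
  assert (Hm6 : mexp N * (pJL N - 1) = 6).
  { unfold mexp. field. intro E. lra. }
  set (p := pJL N) in *. set (m := mexp N) in *.
  set (c0 := (N-6)/2).
  assert (HNc : N = 2*c0+6) by (unfold c0; field).
  assert (Hm0 : 0 < m) by (rewrite Hm; lra).
  assert (Hmc : m < c0) by (rewrite Hm; unfold c0; lra).
  assert (Hc0 : 0 < c0) by lra.
  set (Qm := QQ N m).
  assert (HQm : 0 < Qm).
  { unfold Qm, QQ. repeat (apply Rmult_lt_0_compat; [|lra]). lra. }
  assert (HL : Lc N = Rpower Qm (1/(p-1))).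
  { unfold Lc. cbv zeta. fold m p. rewrite rpow_pos_eq by exact HQm. reflexivity. }
  assert (HLpos : 0 < Lc N) by (rewrite HL; apply exp_pos).
  assert (HLp : rpow (Lc N) (p-1) = Qm).
  { rewrite rpow_pos_eq by auto. rewrite HL, Rpower_mult.
    replace (1/(p-1)*(p-1)) with 1 by (field; lra). apply Rpower_1; auto. }
  assert (HpQ : p * Qm = QQ N c0).
  { unfold Qm, QQ. rewrite Hm, Hp.
    replace ((N + 4 - s) / (N - 8 - s) *
     ((N - 8 - s) / 2 * ((N - 8 - s) / 2 + 2) * ((N - 8 - s) / 2 + 4) *
      (N - 2 - (N - 8 - s) / 2) * (N - 4 - (N - 8 - s) / 2) * (N - 6 - (N - 8 - s) / 2)))
     with (1/64*((N^2-s^2)*((N+4)^2-s^2)*((N-4)^2-s^2))) by (field; lra).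
    rewrite Hcub. unfold c0. field. }
  assert (HPp : forall lam, Ppoly N lam = QQ N (m+lam) - QQ N c0).
  { intros lam. unfold Ppoly. cbv zeta. fold m p. rewrite HLp, HpQ. unfold QQ. ring. }
  assert (Hl : m + lam3 = c0).
  { destruct (Rtotal_order lam3 (c0 - m)) as [Hlt|[Heq|Hgt]].
    - exfalso. assert (Hx : 0 < m + lam3 < c0) by lra.
      generalize (Q_lt c0 (m+lam3) Hx). rewrite <- HNc. rewrite HPp in HP. lra.
    - lra.
    - exfalso. assert (H := Hmin (c0 - m)).
      assert (H0 : Ppoly N (c0 - m) = 0).
      { rewrite HPp. replace (m + (c0-m)) with c0 by ring. ring. }
      specialize (H ltac:(lra) H0). lra. }
  rewrite Hl.
  set (L := Lc N) in *.
  set (gam := - A2 c0 * (beta*(1-beta))).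
  assert (Hgam : 0 < gam).
  { unfold gam, A2. assert (0 < beta*(1-beta)) by nra.
    assert (0 < (c0+2)^2*(c0+4)^2 + c0^2*(c0+4)^2 + c0^2*(c0+2)^2).
    { assert (0 < c0^2) by nra. assert (0 < (c0+2)^2) by nra. assert (0 < (c0+4)^2) by nra. nra. }
    nra. }
  set (u4 := A4 c0 * (beta*(beta-1)*(beta-2)*(beta-3))).
  set (u6 := beta*(beta-1)*(beta-2)*(beta-3)*(beta-4)*(beta-5)).
  set (M := Rabs u4 + Rabs u6).
  assert (HM : 0 <= M) by (unfold M; generalize (Rabs_pos u4) (Rabs_pos u6); lra).
  set (E1 := 1 + 2*M/gam).
  assert (HE1 : 1 <= E1) by (unfold E1; assert (0 <= 2*M/gam) by (apply Rmult_le_pos; [lra|apply Rlt_le, Rinv_0_lt_compat; lra]); lra).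
  set (K := 3125 * Rpower R0 (m - c0) / (c0 - m)^5).
  assert (HK : 0 < K).
  { unfold K. apply Rmult_lt_0_compat; [apply Rmult_lt_0_compat; [lra|apply exp_pos]|].
    apply Rinv_0_lt_compat, pow_lt; lra. }
  assert (Hpp : 0 < p) by lra.
  set (T1 := b*K/L).
  assert (HT1 : 0 < T1) by (unfold T1; apply Rmult_lt_0_compat; [nra|apply Rinv_0_lt_compat; lra]).
  set (T2 := 2*p^2*Qm*b^2*K/(L*gam)).
  assert (HT2 : 0 < T2).
  { unfold T2. apply Rmult_lt_0_compat; [|apply Rinv_0_lt_compat; nra].
    assert (0 < p^2) by nra. assert (0 < b^2) by nra.
    repeat (apply Rmult_lt_0_compat; [|lra]); lra. }
  set (Es := 1 + E1 + T1 + T2).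
  assert (HEs : 1 < Es) by (unfold Es; lra).
  exists (1 + b * Rpower Es (1-beta)).
  split.
  { assert (0 < Rpower Es (1-beta)) by apply exp_pos. nra. }
  intros c Hc. split; [|split].
  - intros r Hr. apply part1; auto.
  - intros r Hr. apply part2; auto.
  - intros r Hr.
    assert (HRp : 0 < Rpower Es (1-beta)) by apply exp_pos.
    assert (Hc1 : 1 < c) by nra.
    assert (Hcb : 0 < c/b) by (apply Rdiv_lt_0_compat; lra).
    set (E0 := Rpower (c/b) (1/(1-beta))).
    assert (HE0 : rpow (c/b) (1/(1-beta)) = E0) by (apply rpow_pos_eq; auto).
    rewrite HE0 in Hr.
    assert (HcbE : Rpower Es (1-beta) < c/b).
    { apply (Rmult_lt_reg_r b); auto. unfold Rdiv. rewrite Rmult_assoc, Rinv_l by lra. lra. }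
    assert (HEsE0 : Es < E0).
    { assert (EE : Es = Rpower (Rpower Es (1-beta)) (1/(1-beta))).
      { rewrite Rpower_mult. replace ((1-beta)*(1/(1-beta))) with 1 by (field; lra).
        rewrite Rpower_1; lra. }
      rewrite EE. unfold E0. apply Rlt_Rpower_l; [apply Rdiv_lt_0_compat; lra|]. split; auto. }
    assert (HE0pos : 0 < E0) by lra.
    assert (Hexp1 : 1 < exp E0) by (rewrite <- exp_0; apply exp_increasing; auto).
    assert (Hr0 : R0 < r) by nra.
    assert (Hrpos : 0 < r) by lra.
    rewrite part3_id by auto.
    unfold u_up. cbv zeta. fold m L.
    assert (Hepos := ell_pos R0 r HR0 Hr0).
    set (e := ell R0 r) in *.
    assert (He : E0 < e).
    { unfold e, ell. rewrite <- (ln_exp E0). apply ln_increasing; [apply exp_pos|].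
      apply (Rmult_lt_reg_r R0); auto. unfold Rdiv. rewrite Rmult_assoc, Rinv_l by lra. lra. }
    assert (He1 : 1 < e) by lra.
    set (EB := rpow e beta).
    assert (HEB : EB = Rpower e beta) by (apply rpow_pos_eq; lra).
    assert (HEB1 : 1 <= EB).
    { rewrite HEB. rewrite <- (Rpower_O e) at 1 by lra. apply Rle_Rpower; lra. }
    assert (Hbe : c * EB < b * e).
    { assert (H1 : c/b < Rpower e (1-beta)).
      { replace (c/b) with (Rpower E0 (1-beta)).
        - apply Rlt_Rpower_l; lra.
        - unfold E0. rewrite Rpower_mult. replace (1/(1-beta)*(1-beta)) with 1 by (field; lra).
          apply Rpower_1; auto. }
      assert (H2 : e = Rpower e (1-beta) * EB).
      { rewrite HEB, <- Rpower_plus. replace (1-beta+beta) with 1 by ring. rewrite Rpower_1; lra. }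
      rewrite H2. apply (Rmult_lt_compat_r EB) in H1; [|lra].
      unfold Rdiv in H1. replace (c * / b * EB) with ((c * EB) / b) in H1 by (field; lra).
      apply (Rmult_lt_compat_l b) in H1; [|lra].
      replace (b * (c*EB/b)) with (c*EB) in H1 by (field; lra). lra. }
    assert (Rle_Es : E1 <= e /\ T1 < e /\ T2 < e) by (unfold Es in HEsE0; lra).
    destruct Rle_Es as [HE1e [HT1e HT2e]].
    fold u4 u6.
    replace (A2 c0 * (beta * (beta - 1))) with gam by (unfold gam; ring).
    replace (A0 c0) with (p * Qm) by (rewrite HpQ; unfold A0, QQ; rewrite HNc; ring).
    replace (m * (m + 2) * (m + 4) * (N - 2 - m) * (N - 4 - m) * (N - 6 - m)) with Qm
      by (unfold Qm, QQ; ring).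
    set (Gp := gam / e ^ 2 + u4 / e ^ 4 - u6 / e ^ 6).
    assert (HGp : gam/(2*e^2) <= Gp) by (apply Gbound; auto; lra).
    assert (Hrl : rpow r (-c0) = Rpower r (m - c0) * rpow r (-m)).
    { rewrite !rpow_pos_eq by lra. rewrite <- Rpower_plus. f_equal. ring. }
    set (Rm := rpow r (-m)) in *. set (Rl := rpow r (-c0)) in *.
    set (Wv := Rpower r (m - c0)) in *.
    assert (HRm : 0 < Rm) by (unfold Rm; rewrite rpow_pos_eq by lra; apply exp_pos).
    assert (HWv : 0 < Wv) by apply exp_pos.
    assert (HWb : e^4 * Wv <= K/e).
    { assert (EW : Wv = Rpower R0 (m - c0) * / exp ((c0 - m) * e)).
      { unfold Wv, Rpower. rewrite <- exp_Ropp, <- exp_plus. f_equal.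
        unfold e, ell. rewrite ln_div by lra. ring. }
      rewrite EW. set (RR := Rpower R0 (m - c0)).
      assert (HRR : 0 < RR) by apply exp_pos.
      assert (H5 := exp5 ((c0 - m) * e) ltac:(nra)).
      assert (Hy : 0 < ((c0 - m) * e)^5/3125) by (apply Rdiv_lt_0_compat; [apply pow_lt; nra|lra]).
      apply Rle_trans with (e^4 * RR * / (((c0 - m) * e)^5/3125)).
      - rewrite Rmult_assoc. apply Rmult_le_compat_l; [apply pow_le; lra|].
        apply Rmult_le_compat_l; [lra|]. apply Rinv_le_contravar; auto.
      - right. unfold K, RR. field. split; lra. }
    assert (He4 : e <= e^4) by (assert (1 <= e^2) by nra; nra).
    assert (HbeW : b * e * Wv < L).
    { assert (e * Wv <= K/e) by nra.
      assert (b*K/e < L).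
      { apply (Rmult_lt_reg_r e); [lra|]. unfold T1 in HT1e.
        replace (b*K/e*e) with (b*K) by (field; lra).
        apply (Rmult_lt_compat_l L) in HT1e; [|lra].
        replace (L * (b*K/L)) with (b*K) in HT1e by (field; lra). lra. }
      assert (Hq : b * (e*Wv) <= b*(K/e)) by (apply Rmult_le_compat_l; lra).
      replace (b*(K/e)) with (b*K/e) in Hq by (field; lra).
      replace (b*e*Wv) with (b*(e*Wv)) by ring. lra. }
    set (X := Rl * (b*e - c*EB)).
    assert (HRl : 0 < Rl) by (rewrite Hrl; apply Rmult_lt_0_compat; auto).
    assert (HX0 : 0 <= X) by (unfold X; apply Rmult_le_pos; lra).
    assert (HXle : X <= b*e*Rl).
    { assert (0 <= Rl*(c*EB)) by (apply Rmult_le_pos; nra).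
      replace X with (Rl*(b*e) - Rl*(c*EB)) by (unfold X; ring). lra. }
    assert (HXA : X < L * Rm).
    { rewrite Hrl in HXle. assert (b*e*Wv*Rm < L*Rm) by (apply Rmult_lt_compat_r; auto). lra. }
    replace (L * Rm - b * Rl * e + c * Rl * EB) with (L*Rm - X) by (unfold X; ring).
    rewrite rpow_pos_eq by lra.
    assert (HLRp : Rpower L p = L * Qm).
    { assert (H := Rpower_plus 1 (p-1) L). replace (1 + (p-1)) with p in H by ring.
      rewrite H, Rpower_1 by lra. rewrite <- HLp, rpow_pos_eq by lra. reflexivity. }
    assert (Hr6 : Rpower r 6 = r^6).
    { rewrite <- Rpower_pow by lra. f_equal. simpl. ring. }
    assert (HRmp : Rpower Rm p = Rm / r^6).
    { unfold Rm. rewrite rpow_pos_eq by lra. rewrite Rpower_mult.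
      replace (- m * p) with (-m + Ropp 6) by lra.
      rewrite Rpower_plus, (Rpower_Ropp r 6), Hr6. unfold Rdiv. reflexivity. }
    assert (HAp : Rpower (L*Rm) p = L*Rm*Qm/r^6).
    { rewrite <- Rpower_mult_distr by lra. rewrite HLRp, HRmp. field. lra. }
    assert (Hr6p : 0 < r^6) by (apply pow_lt; lra).
    assert (Hkey : p^2*Qm*X^2/(L*Rm) <= Rl*(c*EB*Gp)).
    { assert (HX2 : X^2 <= (b*e*Rl)^2) by (apply pow_incr; lra).
      assert (Hp2 : 0 < p^2*Qm) by (apply Rmult_lt_0_compat; [apply pow_lt|]; lra).
      apply Rle_trans with (p^2*Qm*(b*e*Rl)^2/(L*Rm)).
      { unfold Rdiv. apply Rmult_le_compat_r; [apply Rlt_le, Rinv_0_lt_compat; apply Rmult_lt_0_compat; lra|].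
        apply Rmult_le_compat_l; lra. }
      replace (p^2*Qm*(b*e*Rl)^2/(L*Rm)) with (Rl * (p^2*Qm*b^2/L * (e^2*Wv)))
        by (rewrite Hrl; field; lra).
      apply Rmult_le_compat_l; [lra|].
      assert (HeW : e^2*Wv <= K/e^3).
      { apply (Rmult_le_reg_r (e^2)); [nra|].
        replace (e^2*Wv*e^2) with (e^4*Wv) by ring.
        replace (K/e^3*e^2) with (K/e) by (field; lra). exact HWb. }
      assert (Hc3 : 0 < p^2*Qm*b^2/L).
      { apply Rdiv_lt_0_compat; [|lra]. apply Rmult_lt_0_compat; [exact Hp2|nra]. }
      apply Rle_trans with (p^2*Qm*b^2/L * (K/e^3)).
      { apply Rmult_le_compat_l; lra. }
      assert (Hgp : 0 < gam/(2*e^2)) by (apply Rdiv_lt_0_compat; nra).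
      apply Rle_trans with (gam/(2*e^2)).
      - unfold T2 in HT2e.
        apply (Rmult_le_reg_r (2*e^3/gam)); [apply Rdiv_lt_0_compat; nra|].
        replace (p^2*Qm*b^2/L*(K/e^3)*(2*e^3/gam)) with (2*p^2*Qm*b^2*K/(L*gam)) by (field; nra).
        replace (gam/(2*e^2)*(2*e^3/gam)) with e by (field; nra). lra.
      - assert (1 <= c*EB) by nra. nra. }
    apply Rle_ge. eapply Rle_trans.
    { apply (final_ineq (L*Rm) X Qm p (Rl*(c*EB*Gp)) (r^6)); auto; nra. }
    right. unfold X. field. lra.
Qed.
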